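(* In the qubit–battery model with the ''copy'' interaction $$U_{SB}=|0\rangle\langle0|_S\otimes|0\rangle\langle0|_B+\sum_{n\ge1}\sum_{i,j\in\{0,1\}}V_{ij}\,|i\rangle\langle j|_S\otimes|n-i\rangle\langle n-j|_B,$$ for every normalized battery state $|\beta\rangle_B=\sum_{n\ge0}\beta_n|n\rangle_B$ one has $$\epsilon_C(\mathbf\Phi_{|\beta\rangle},\mathcal V)=|V_{01}|^2\sum_{n=1}^\infty\Big[|\beta_{n+1}-\beta_n|^2-\frac{|V_{01}|^2}{4}|\beta_{n+1}+\beta_{n-1}-2\beta_n|^2\Big]+\Delta(\beta_0,\beta_1,V_S),$$ where $$\Delta(\beta_0,\beta_1,V_S)=|\beta_0|^2+|V_{01}|^2\big(|\beta_1|^2-\mathrm{Re}[\beta_0\beta_1^*]\big)-\frac14\big|\beta_0(V_{00}^*+|V_{11}|^2)+\beta_1|V_{01}|^2\big|^2 .$$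
   Context: Qubit $S$ with energy basis $|0\rangle_S,|1\rangle_S$, $H_S=\frac\omega2(|1\rangle\langle1|-|0\rangle\langle0|)$; harmonic-oscillator battery $B$ with basis $\{|n\rangle_B\}_{n\ge0}$, $H_B=\omega\sum_n n|n\rangle\langle n|$. $V_S$ is a qubit unitary with entries $V_{ij}=\langle i|V_S|j\rangle$, $\mathcal V(\cdot)=V_S\cdot V_S^\dagger$. The channel is $\mathbf\Phi_{|\beta\rangle}(\rho)=\mathrm{Tr}_B[U_{SB}(\rho\otimes|\beta\rangle\langle\beta|_B)U_{SB}^\dagger]$ with Kraus operators $K^{(n)}={}_B\langle n|U_{SB}|\beta\rangle_B$, and the Choi infidelity is $\epsilon_C(\mathbf\Phi,\mathcal V)=1-\frac14\sum_n|\mathrm{Tr}[V_S^\dagger K^{(n)}]|^2$ (equivalently $1-F$ of the Choi states, $F$ the Uhlmann fidelity). *)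

(* Defs.v *)
From HB Require Import structures.
From mathcomp Require Import all_boot all_order all_algebra.
From mathcomp Require Import complex.
From mathcomp Require Import all_classical all_reals all_analysis.
Set Implicit Arguments. Unset Strict Implicit. Unset Printing Implicit Defensive.
Import Order.TTheory GRing.Theory Num.Theory.
Import numFieldNormedType.Exports.
Local Open Scope ring_scope.
Local Open Scope complex_scope.
Local Open Scope classical_set_scope.

Section Defs.
Variable R : realType.
Notation C := R[i].

Definition normsq (z : C) : R := complex.Re z ^+ 2 + complex.Im z ^+ 2.

Definition adjmx (V : 'M[C]_2) : 'M[C]_2 := (map_mx (fun z => z^*) V)^T.

Definition unitary2 (V : 'M[C]_2) : Prop :=
  adjmx V *m V = 1%:M /\ V *m adjmx V = 1%:M.

Definition rseries (m : nat) (u : nat -> R) : R :=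
  limn (fun N => \sum_(m <= k < N) u k).

Definition normalized (beta : nat -> C) : Prop :=
  (fun N => \sum_(0 <= k < N) normsq (beta k)) @ \oo --> (1 : R).

(* Matrix element <i|_S <n|_B U_SB |j>_S |m>_B of the "copy" unitary
   U_SB = |0><0| (x) |0><0| + sum_{k>=1} sum_{i,j} V_ij |i><j| (x) |k-i><k-j|.
   For fixed (i,n) only k = n + i can contribute (k - i = n, i <= 1 <= k),
   so the sum over k >= 1 is written over 1 <= k <= n+1. *)
Definition Ucopy (V : 'M[C]_2) (i : 'I_2) (n : nat) (j : 'I_2) (m : nat) : C :=
  (((i == 0 :> nat) && (j == 0 :> nat) && (n == 0)%N && (m == 0)%N)%:R : C)
  + \sum_(1 <= k < n.+2)
      (if ((n == k - i)%N && (m == k - j)%N) then V i j else 0).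

(* Kraus operator K^(n) = <n|_B U_SB |beta>_B, entries
   K^(n)_{ij} = sum_m <i,n|U|j,m> beta_m. Nonzero terms only have
   m = k - j <= n + 1, so the sum over m is written over m < n+3. *)
Definition kraus (V : 'M[C]_2) (beta : nat -> C) (n : nat) : 'M[C]_2 :=
  \matrix_(i < 2, j < 2) \sum_(m < n.+3) Ucopy V i n j m * beta m.

Definition choi_infidelity (V : 'M[C]_2) (beta : nat -> C) : R :=
  1 - 4^-1 * rseries 0 (fun n => normsq (\tr (adjmx V *m kraus V beta n))).

Definition Delta (V : 'M[C]_2) (b0 b1 : C) : R :=
  normsq b0 + normsq (V 0 1) * (normsq b1 - complex.Re (b0 * b1^*))
  - 4^-1 * normsq (b0 * ((V 0 0)^* + (normsq (V 1 1))%:C)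
                   + b1 * (normsq (V 0 1))%:C).

End Defs.

(* Main.v *)
Require Import Defs.
From HB Require Import structures.
From mathcomp Require Import all_boot all_order all_algebra.
From mathcomp Require Import complex.
From mathcomp Require Import all_classical all_reals all_analysis.
From mathcomp Require Import zify ring lra.
Import Order.TTheory GRing.Theory Num.Theory.
Import numFieldNormedType.Exports.
Local Open Scope ring_scope.
Local Open Scope complex_scope.
Local Open Scope classical_set_scope.




Lemma kraus_entry {R : realType} (V : 'M[R[i]]_2) (beta : nat -> R[i]) n i j : kraus V beta n i j =
  ((i == 0 :> nat) && (j == 0 :> nat) && (n == 0)%N)%:R * beta 0%N
  + \sum_(1 <= k < n.+2 | (n == k - i)%N) V i j * beta (k - j)%N.
Proof.
rewrite mxE.
under eq_bigr => m _ do rewrite /Ucopy mulrDl mulr_suml.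
rewrite big_split /=; congr (_ + _).
  rewrite big_ord_recl /= big1 ?addr0 ?andbT //.
  by move=> m _; rewrite andbF mul0r.
rewrite exchange_big /= [RHS]big_mkcond /=; apply: eq_big_nat => k /andP[k1 k2].
case: ifP => [/eqP hn|hn]; last by apply: big1 => m _; rewrite /= mul0r.
have kj : (k - j < n.+3)%N by lia.
rewrite (bigD1 (Ordinal kj)) //= eqxx big1 ?addr0 // => m /negPf hm.
by rewrite -(inj_eq val_inj) /= in hm; rewrite hm mul0r.
Qed.

Lemma sumKg {R : realType} n (i : 'I_2) (F : nat -> R[i]) :
  \sum_(1 <= k < n.+2 | (n == k - i)%N) F k = if (1 <= n + i)%N then F (n + i)%N else 0.
Proof.
rewrite big_nat_cond (eq_bigl (fun k => (1 <= n + i)%N && (k == n + i)%N)); last first.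
  move=> k /=; have := ltn_ord i; lia.
rewrite big_nat1_cond_eq; congr (if _ then _ else _); have := ltn_ord i; lia.
Qed.

Lemma trE {R : realType} (V : 'M[R[i]]_2) (K : 'M[R[i]]_2) : \tr (adjmx V *m K) =
  (V 0 0)^* * K 0 0 + (V 0 1)^* * K 0 1 + (V 1 0)^* * K 1 0 + (V 1 1)^* * K 1 1.
Proof.
rewrite /mxtrace !big_ord_recl big_ord0 !mxE !big_ord_recl !big_ord0 /adjmx !mxE.
rewrite !addr0.
have -> : lift ord0 ord0 = 1 :> 'I_2 by apply: val_inj.
have -> : ord0 = 0 :> 'I_2 by apply: val_inj.
ring.
Qed.

Lemma tr0 {R : realType} (V : 'M[R[i]]_2) (beta : nat -> R[i]) : \tr (adjmx V *m kraus V beta 0) =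
  (V 0 0)^* * beta 0%N + (V 1 0)^* * V 1 0 * beta 1%N + (V 1 1)^* * V 1 1 * beta 0%N.
Proof.
rewrite trE !kraus_entry !sumKg /= (modn_small (isT : (1 < 2)%N)) /=.
by rewrite !mul1r !mul0r !add0r !addr0 mulr0 addr0 !mulrA.
Qed.

Lemma trS {R : realType} (V : 'M[R[i]]_2) (beta : nat -> R[i]) n : \tr (adjmx V *m kraus V beta n.+1) =
  (V 0 0)^* * V 0 0 * beta n.+1 + (V 0 1)^* * V 0 1 * beta n
  + (V 1 0)^* * V 1 0 * beta n.+2 + (V 1 1)^* * V 1 1 * beta n.+1.
Proof.
rewrite trE !kraus_entry !sumKg /= (modn_small (isT : (1 < 2)%N)) /=.
by rewrite !mul0r !add0r !addn0 !addn1 !subn0 !subn1 /= !mulrA.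
Qed.


Lemma conjmul {R : realType} (z : R[i]) : z^* * z = (normsq z)%:C.
Proof. case: z => a b; rewrite /normsq /=; simpc; congr (_ +i* _); ring. Qed.

Lemma step_id {R : realType} (p : R) (a b c : R[i]) :
 - 4^-1 * normsq ((1-p)%:C * b + p%:C * a + p%:C * c + (1-p)%:C * b)
 = p * (normsq (c - b) - p / 4 * normsq (c + a - 2%:R * b)) - normsq b
   + p * (complex.Re (b^* * c) - normsq c) - p * (complex.Re (a^* * b) - normsq b).
Proof.
rewrite mulr_natl mulr2n.
case: a => a1 a2; case: b => b1 b2; case: c => c1 c2; rewrite /normsq /=.
by field; rewrite ?pnatr_eq0.
Qed.

Lemma sq3 {R : realType} (u v w : R) : (u + v + w) ^+ 2 <= 3 * (u ^+ 2 + v ^+ 2 + w ^+ 2).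
Proof.
have := sqr_ge0 (u - v); have := sqr_ge0 (v - w); have := sqr_ge0 (u - w).
rewrite !sqrrB => h1 h2 h3; rewrite !sqrrD; lra.
Qed.

Lemma sqk {R : realType} (k y : R) : 0 <= k <= 2 -> (k * y) ^+ 2 <= 4 * y ^+ 2.
Proof.
move=> /andP[k0 k2]; rewrite exprMn; apply: ler_wpM2r; first exact: sqr_ge0.
rewrite (_ : 4 = 2 ^+ 2); last by rewrite expr2; lra.
by rewrite ler_sqr ?nnegrE //; lra.
Qed.

Lemma comp_bound {R : realType} (p x y z : R) : 0 <= p <= 1 ->
  ((2 - 2 * p) * y + p * x + p * z) ^+ 2 <= 12 * (x ^+ 2 + y ^+ 2 + z ^+ 2).
Proof.
move=> /andP[p0 p1].
have h1 := sq3 ((2 - 2 * p) * y) (p * x) (p * z).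
have k1 : 0 <= 2 - 2 * p <= 2 by apply/andP; split; lra.
have k2 : 0 <= p <= 2 by apply/andP; split; lra.
have := sqk _ y k1; have := sqk _ x k2; have := sqk _ z k2.
lra.
Qed.

Lemma bound_T {R : realType} (p : R) (a b c : R[i]) : 0 <= p <= 1 ->
  normsq ((1-p)%:C * b + p%:C * a + p%:C * c + (1-p)%:C * b)
  <= 12 * (normsq a + normsq b + normsq c).
Proof.
move=> hp.
case: a => a1 a2; case: b => b1 b2; case: c => c1 c2; rewrite /normsq /=.
have -> : (1 - p) * b1 - 0 * b2 + (p * a1 - 0 * a2) + (p * c1 - 0 * c2) + ((1 - p) * b1 - 0 * b2)
  = (2 - 2 * p) * b1 + p * a1 + p * c1 by ring.
have -> : (1 - p) * b2 + 0 * b1 + (p * a2 + 0 * a1) + (p * c2 + 0 * c1) + ((1 - p) * b2 + 0 * b1)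
  = (2 - 2 * p) * b2 + p * a2 + p * c2 by ring.
have := @comp_bound R p a1 b1 c1 hp; have := @comp_bound R p a2 b2 c2 hp; lra.
Qed.

Lemma normsq_ge0 {R : realType} (z : R[i]) : 0 <= normsq z.
Proof. by rewrite /normsq addr_ge0 // sqr_ge0. Qed.

Lemma unitC {R : realType} (a b : R) : a%:C + b%:C = 1 :> R[i] -> a + b = 1.
Proof. by move/(congr1 (@complex.Re R)). Qed.

Lemma entry_adjV {R : realType} (V : 'M[R[i]]_2) i j :
  (adjmx V *m V) i j = (V 0 i)^* * V 0 j + (V 1 i)^* * V 1 j.
Proof.
rewrite mxE !big_ord_recl big_ord0 addr0 /adjmx !mxE.
have -> : lift ord0 ord0 = 1 :> 'I_2 by apply: val_inj.
by have -> : ord0 = 0 :> 'I_2 by apply: val_inj.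
Qed.

Lemma entry_Vadj {R : realType} (V : 'M[R[i]]_2) i j :
  (V *m adjmx V) i j = V i 0 * (V j 0)^* + V i 1 * (V j 1)^*.
Proof.
rewrite mxE !big_ord_recl big_ord0 addr0 /adjmx !mxE.
have -> : lift ord0 ord0 = 1 :> 'I_2 by apply: val_inj.
by have -> : ord0 = 0 :> 'I_2 by apply: val_inj.
Qed.

Lemma ReC_bound {R : realType} (x y : R[i]) :
  - (normsq x + normsq y) <= complex.Re (x^* * y) <= normsq x + normsq y.
Proof.
case: x => a b; case: y => c d; rewrite /normsq /=.
have := sqr_ge0 (a - c); have := sqr_ge0 (b - d);
have := sqr_ge0 (a + c); have := sqr_ge0 (b + d).
rewrite !sqrrB !sqrrD => h1 h2 h3 h4.
apply/andP; split; nra.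
Qed.

Lemma ReCC {R : realType} (x y : R[i]) : complex.Re (x * y^*) = complex.Re (x^* * y).
Proof. case: x => a b; case: y => c d => /=; ring. Qed.

Theorem mainTheorem5 (R : realType) (V : 'M[R[i]]_2) (beta : nat -> R[i]) :
  unitary2 V -> normalized beta ->
  choi_infidelity V beta =
    normsq (V 0 1) *
      rseries 1 (fun n => normsq (beta n.+1 - beta n)
                 - normsq (V 0 1) / 4
                   * normsq (beta n.+1 + beta n.-1 - 2%:R * beta n))
    + Delta V (beta 0%N) (beta 1%N).
Proof.
move=> [hU1 hU2] hnorm.
have n00 : normsq (V 0 0) + normsq (V 1 0) = 1.
  by apply: unitC; rewrite -!conjmul -entry_adjV hU1 mxE eqxx mulr1n.
have n11 : normsq (V 0 1) + normsq (V 1 1) = 1.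
  by apply: unitC; rewrite -!conjmul -entry_adjV hU1 mxE eqxx mulr1n.
have n00b : normsq (V 0 0) + normsq (V 0 1) = 1.
  apply: unitC; rewrite -!conjmul (mulrC (V 0 0)^*) (mulrC (V 0 1)^*).
  by rewrite -entry_Vadj hU2 mxE eqxx mulr1n.
set p := normsq (V 0 1) in n11 n00b *.
have e00 : normsq (V 0 0) = 1 - p by lra.
have e10 : normsq (V 1 0) = p by lra.
have e11 : normsq (V 1 1) = 1 - p by lra.
have hp : 0 <= p <= 1.
  by apply/andP; split; [exact: normsq_ge0 | have := normsq_ge0 (V 0 0); lra].
pose u n := normsq (\tr (adjmx V *m kraus V beta n)).
have u0 : u 0%N = normsq ((V 0 0)^* * beta 0%N + p%:C * beta 1%N + (1-p)%:C * beta 0%N).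
  by rewrite /u tr0 !conjmul e10 e11.
have uS n : u n.+1 = normsq ((1-p)%:C * beta n.+1 + p%:C * beta n + p%:C * beta n.+2
                               + (1-p)%:C * beta n.+1).
  by rewrite /u trS !conjmul e00 e10 e11.
pose S N := \sum_(0 <= k < N) u k.
pose Q N := \sum_(1 <= k < N) (normsq (beta k.+1 - beta k)
                 - p / 4 * normsq (beta k.+1 + beta k.-1 - 2%:R * beta k)).
pose B N := \sum_(0 <= k < N) normsq (beta k).
pose D := Delta V (beta 0%N) (beta 1%N).
have hS N : S N.+1 = S N + u N by rewrite /S big_nat_recr.
have hB N : B N.+1 = B N + normsq (beta N) by rewrite /B big_nat_recr.
have hQ N : Q N.+2 = Q N.+1 + (normsq (beta N.+2 - beta N.+1)
                 - p / 4 * normsq (beta N.+2 + beta N - 2%:R * beta N.+1)).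
  by rewrite /Q big_nat_recr.
have S0 : S 0%N = 0 by rewrite /S big_geq.
have B0 : B 0%N = 0 by rewrite /B big_geq.
have Q1 : Q 1%N = 0 by rewrite /Q big_geq.
have iden N : 1 - 4^-1 * S N.+1 = p * Q N.+1 + D + (1 - B N.+1)
    + p * (complex.Re ((beta N)^* * beta N.+1) - normsq (beta N.+1)).
  elim: N => [|N IH].
    rewrite hS S0 hB B0 Q1 u0 /D /Delta e11 ReCC -/p.
    have -> : beta 0%N * ((V 0 0)^* + (1 - p)%:C) + beta 1%N * p%:C
      = (V 0 0)^* * beta 0%N + p%:C * beta 1%N + (1-p)%:C * beta 0%N by ring.
    lra.
  rewrite hS hQ hB uS.
  have := step_id p (beta N) (beta N.+1) (beta N.+2).
  lra.
have u_ge0 n : 0 <= u n by exact: normsq_ge0.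
have bnd N : S N.+1 <= u 0%N + 12 * (B N + B N.+1 + B N.+2).
  elim: N => [|N IH].
    rewrite hS S0 (hB 1%N) hB B0.
    have := normsq_ge0 (beta 0%N); have := normsq_ge0 (beta 1%N); lra.
  rewrite hS uS (hB N.+2).
  have := bound_T p (beta N) (beta N.+1) (beta N.+2) hp.
  have := hB N; have := hB N.+1; lra.
have Bnd : nondecreasing_seq B.
  by apply: nondecreasing_series => n _ _; exact: normsq_ge0.
have Snd : nondecreasing_seq S.
  by apply: nondecreasing_series => n _ _; exact: u_ge0.
have hB1 : B @ \oo --> (1 : R) := hnorm.
have limB : limn B = 1 by apply: cvg_lim.
have Ble1 n : B n <= 1.
  rewrite -limB; apply: nondecreasing_cvgn_le => //; exact: (cvgP _ hB1).
have cvgS : cvgn S.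
  apply: nondecreasing_is_cvgn => //; exists (u 0%N + 36) => y [n _ <-].
  apply: le_trans (Snd n n.+1 (leqnSn n)) _; apply: le_trans (bnd n) _.
  have := Ble1 n; have := Ble1 n.+1; have := Ble1 n.+2; lra.
set L := limn S.
have hS1 : (fun N => S N.+1) @ \oo --> L.
  by rewrite cvg_shiftS; exact: cvgS.
have hBS : (fun N => B N.+1) @ \oo --> (1 : R).
  by rewrite cvg_shiftS; exact: hB1.
have hb : (fun N => normsq (beta N)) @ \oo --> (0 : R).
  have hb' : (fun N => B N.+1 - B N) @ \oo --> (0 : R).
    by have := cvgB hBS hB1; rewrite subrr => h; exact: h.
  have e : (fun N => normsq (beta N)) = (fun N => B N.+1 - B N).
    by apply/funext => N; rewrite hB addrAC subrr add0r.
  by rewrite e.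
have hb1 : (fun N => normsq (beta N.+1)) @ \oo --> (0 : R).
  by have := hb; rewrite -(cvg_shiftS (fun N => normsq (beta N))) => h; exact: h.
have hc : (fun N => complex.Re ((beta N)^* * beta N.+1)) @ \oo --> (0 : R).
  apply: (@squeeze_cvgr _ _ _ _ (fun N => - (normsq (beta N) + normsq (beta N.+1)))
     (fun N => normsq (beta N) + normsq (beta N.+1))).
  - apply: nearW => N; exact: (ReC_bound (beta N) (beta N.+1)).
  - by have := cvgN (cvgD hb hb1); rewrite addr0 oppr0 => h; exact: h.
  - by have := cvgD hb hb1; rewrite addr0 => h; exact: h.
have hpQ : (fun N => p * Q N.+1) @ \oo --> 1 - 4^-1 * L - D.
  have -> : (fun N => p * Q N.+1) = (fun N => (1 - 4^-1 * S N.+1) - D - (1 - B N.+1)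
      - p * (complex.Re ((beta N)^* * beta N.+1) - normsq (beta N.+1))).
    by apply/funext => N; have := iden N; lra.
  have H := cvgB (cvgB (cvgB (cvgB (cvg_cst (1:R)) (cvgM (cvg_cst (4^-1 : R)) hS1))
     (cvg_cst D)) (cvgB (cvg_cst (1:R)) hBS)) (cvgM (cvg_cst p) (cvgB hc hb1)).
  have lim_eq : (1 - 4^-1 * L - D - (1 - 1) - p * (0 - 0)) = 1 - 4^-1 * L - D.
    by rewrite subrr !subr0 mulr0 subr0.
  rewrite lim_eq in H; exact: H.
rewrite /choi_infidelity /rseries.
change (1 - 4^-1 * L = p * limn Q + D).
case: (eqVneq p 0) => [p0|pn0].
  have e : (fun N => p * Q N.+1) = (fun _ => 0) by apply/funext => N; rewrite p0 mul0r.
  rewrite e in hpQ.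
  have h0 : lim ((fun _ : nat => (0:R)) @ \oo) = 1 - 4^-1 * L - D by apply: cvg_lim.
  have h1 : lim ((fun _ : nat => (0:R)) @ \oo) = 0 by apply: lim_cst.
  rewrite p0 mul0r add0r; lra.
have e : (fun N => Q N.+1) = (fun N => p^-1 * (p * Q N.+1)).
  by apply/funext => N; rewrite mulKf.
have hQ1 : (fun N => Q N.+1) @ \oo --> p^-1 * (1 - 4^-1 * L - D).
  by rewrite e; exact: (cvgM (cvg_cst _) hpQ).
have hQQ : Q @ \oo --> p^-1 * (1 - 4^-1 * L - D) by rewrite -cvg_shiftS.
have -> : limn Q = p^-1 * (1 - 4^-1 * L - D) by apply: cvg_lim.
rewrite mulVKf //; lra.
Qed.
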